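(* Let $d\geq2$, let $\omega\in\mathbb{R}^d$ be non-resonant (i.e. $\langle\omega,k\rangle\neq0$ for all $k\in\mathbb{Z}^d\setminus\{0\}$), and let $(k_n)$ be a sequence in $\mathbb{Z}^d$ with $|k_n|\to\infty$ and $|\langle\omega,k_n\rangle|<C/|k_n|^{d-1}$ for a constant $C$ independent of $n$. Then (for $n$ large enough) there exists an integer vector $k_n'\in\mathbb{Z}^d$ such that $$\langle k_n,k_n'\rangle=0,\qquad |k_n'|\sim|k_n|,\qquad |\langle k_n',\omega\rangle|\sim|k_n|.$$
   Context: $|\cdot|$ is the Euclidean norm. The notation $f\sim g$ means $\frac1{C'}g<f<C'g$ for some constant $C'>1$ independent of $n$. *)

(* Defs.v *)
From mathcomp Require Import all_boot all_order all_algebra.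
From mathcomp Require Import reals.
Set Implicit Arguments. Unset Strict Implicit. Unset Printing Implicit Defensive.
Import Order.TTheory GRing.Theory Num.Theory.
Local Open Scope ring_scope.

Definition dotZ (d : nat) (k k' : 'I_d -> int) : int := \sum_(i < d) k i * k' i.

Definition dotRZ (R : realType) (d : nat) (w : 'I_d -> R) (k : 'I_d -> int) : R :=
  \sum_(i < d) w i * (k i)%:~R.

Definition normZ (R : realType) (d : nat) (k : 'I_d -> int) : R :=
  Num.sqrt (\sum_(i < d) ((k i)%:~R : R) ^+ 2).

Definition nonresonant (R : realType) (d : nat) (w : 'I_d -> R) : Prop :=
  forall k : 'I_d -> int, (exists i, k i != 0) -> dotRZ w k != 0.

(* Main.v *)
Require Import Defs.
From mathcomp Require Import all_boot all_order all_algebra.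
From mathcomp Require Import reals ring lra.
Import Order.TTheory GRing.Theory Num.Theory.
Local Open Scope ring_scope.

Lemma big2 (V : nmodType) d (i j : 'I_d) (F : 'I_d -> int -> V) (x y : int) :
  i != j -> (forall l, F l 0 = 0) ->
  \sum_(l < d) F l (if l == i then x else if l == j then y else 0) = F i x + F j y.
Proof.
move=> ij F0; rewrite (bigD1 i) //= eqxx (bigD1 j) /=; last by rewrite eq_sym.
rewrite eq_sym (negbTE ij) eqxx big1 ?addr0 // => l /andP[li lj].
by rewrite (negbTE li) (negbTE lj) F0.
Qed.

Lemma nz_coord (R : realType) d (w : 'I_d -> R) (hw : nonresonant w) l : w l != 0.
Proof.
have := hw (fun m => if m == l then 1 else 0).
have -> : dotRZ w (fun m => if m == l then 1 else 0) = w l.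
  rewrite /dotRZ (bigD1 l) //= eqxx big1 ?addr0 ?mulr1 // => m ml.
  by rewrite (negbTE ml) mulr0.
by apply; exists l; rewrite eqxx.
Qed.

Lemma le_sum1 (R : realType) d (F : 'I_d -> R) l :
  (forall m, 0 <= F m) -> F l <= \sum_m F m.
Proof.
move=> F0; rewrite (bigD1 l) //= lerDl; exact: sumr_ge0.
Qed.

Lemma le_sum2 (R : realType) d (F : 'I_d -> R) i j :
  i != j -> (forall m, 0 <= F m) -> F i + F j <= \sum_m F m.
Proof.
move=> ij F0; rewrite (bigD1 i) //= (bigD1 j) /=; last by rewrite eq_sym.
rewrite addrA lerDl; exact: sumr_ge0.
Qed.

Lemma core (R : realType) d (hd : (2 <= d)%N) (w : 'I_d -> R)
  (wnz : forall l, w l != 0) (C : R) (kn : 'I_d -> int) (W V C' s : R)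
  (hW : W = \sum_l `|w l|) (hV : V = \sum_l `|w l|^-1)
  (hC' : C' = d%:R + 4 + W + 2 * d%:R * V) (hs : s = normZ R kn)
  (Hs : 1 + 2 * `|C| * V < s)
  (Hd : `|dotRZ w kn| < C / s ^+ d.-1) :
  exists k' : 'I_d -> int,
      [/\ dotZ kn k' = 0,
          s / C' < normZ R k' < C' * s
        & s / C' < `|dotRZ w k'| < C' * s].
Proof.
have W0 : 0 <= W by rewrite hW; apply: sumr_ge0 => l _.
have V0 : 0 <= V by rewrite hV; apply: sumr_ge0 => l _; rewrite invr_ge0.
have d0 : (0 < d)%N by apply: leq_trans hd.
have dR : 2 <= d%:R :> R by rewrite (ler_nat R 2 d).
have dV0 := mulr_ge0 (mulr_ge0 (ler0n R 2) (ler0n R d)) V0.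
have C'4 : d%:R + 4 <= C' by rewrite hC'; lra.
have C'W : W + 4 <= C' by rewrite hC'; lra.
have C'0 : 0 < C' by lra.
pose x l : R := (kn l)%:~R.
pose S := \sum_l x l ^+ 2.
have S0 : 0 <= S by apply: sumr_ge0 => l _; exact: sqr_ge0.
have sS : s ^+ 2 = S by rewrite hs /normZ sqr_sqrtr.
have s0 : 0 <= s by rewrite hs; apply: sqrtr_ge0.
have CV0 : 0 <= 2 * `|C| * V by rewrite mulr_ge0 ?mulr_ge0.
have s1 : 1 < s by lra.
have P1 : s <= s ^+ d.-1.
  have -> : d.-1 = (d.-2).+1 by case: (d) hd => [|[|]].
  rewrite exprS -{1}(mulr1 s) ler_wpM2l //; apply: exprn_ege1; lra.
set D := dotRZ w kn.
have P0 : 0 < s ^+ d.-1 by lra.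
have HD : `|D| * s ^+ d.-1 < C by rewrite -ltr_pdivlMr.
case: (@arg_maxnP _ (Ordinal d0) xpredT (fun l => `|kn l|%N) isT) => i _ Hi.
have imax l : x l ^+ 2 <= x i ^+ 2.
  have h : `|x l| <= `|x i| by rewrite /x -!intr_norm ler_int -!abszE lez_nat; exact: Hi.
  rewrite -(real_normK (num_real (x l))) -(real_normK (num_real (x i))).
  have := normr_ge0 (x l); nra.
have Sle : S <= d%:R * x i ^+ 2.
  rewrite /S; apply: le_trans (ler_sum _ (fun l _ => imax l)) _.
  by rewrite sumr_const card_ord mulr_natl.
have xle l : x l ^+ 2 <= S := @le_sum1 R d (fun m => x m ^+ 2) l (fun m => sqr_ge0 (x m)).
have xabs l : `|x l| <= s.
  have := xle l; rewrite -(real_normK (num_real (x l))) -sS.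
  have := normr_ge0 (x l); nra.
pose a l := w i * x l - w l * x i.
have ident : \sum_l x l * a l = w i * S - x i * D.
  rewrite /S /D /dotRZ !mulr_sumr -sumrB; apply: eq_bigr => l _; rewrite /a /x; ring.
set e := s / C'.
have eC : e * C' = s by rewrite /e mulrVK ?unitfE ?gt_eqF.
have e0 : 0 < e by rewrite /e divr_gt0 //; lra.
pose u : R := `|w i|.
have u0 : 0 < u by rewrite /u normr_gt0.
have uV : 1 <= u * V.
  have : u^-1 <= V by rewrite hV /u; apply: (@le_sum1 R d (fun m => `|w m|^-1)) => m; rewrite invr_ge0.
  by rewrite -(divff (negbT (gt_eqF u0))) ler_pM2l.
have uC' : 2 * d%:R <= u * C'.
  have : u * (2 * d%:R * V) <= u * C' by rewrite ler_pM2l //; lra.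
  have : 2 * d%:R * 1 <= 2 * d%:R * (u * V) by rewrite ler_pM2l //; lra.
  have -> : u * (2 * d%:R * V) = 2 * d%:R * (u * V) by ring.
  lra.
have xD : `|x i| * `|D| < C.
  have := normr_ge0 D; have := xabs i; nra.
have [j Hj] : exists j, e < `|a j|.
  case: (boolP [exists j, e < `|a j|]) => [/existsP//|/existsPn Hn]; exfalso.
  have Hn' l : `|a l| <= e by have := Hn l; rewrite -leNgt.
  have B1 : `|\sum_l x l * a l| <= d%:R * (s * e).
    apply: le_trans (ler_norm_sum _ _ _) _.
    apply: le_trans (_ : _ <= \sum_(l < d) s * e) _.
      by apply: ler_sum => l _; rewrite normrM; apply: ler_pM.
    by rewrite sumr_const card_ord mulr_natl.
  rewrite ident in B1.
  have B2 : u * S <= `|w i * S - x i * D| + `|x i| * `|D|.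
    have -> : `|x i| * `|D| = `|x i * D| by rewrite normrM.
    have -> : u * S = `|w i * S| by rewrite normrM (ger0_norm S0).
    by rewrite -{1}(subrK (x i * D) (w i * S)) ler_normD.
  have f1 : d%:R * (s * e) * 2 <= u * S.
    rewrite -(ler_pM2r C'0) -sS.
    have -> : d%:R * (s * e) * 2 * C' = 2 * d%:R * s ^+ 2 by rewrite -eC; ring.
    have -> : u * s ^+ 2 * C' = (u * C') * s ^+ 2 by ring.
    by rewrite ler_pM2r ?exprn_gt0 //; lra.
  have f2 : 2 * `|C| <= u * S.
    have h1 : s <= S by rewrite -sS; nra.
    have h2 : u * (2 * `|C| * V) <= u * S by rewrite ler_pM2l //; lra.
    have h3 : 2 * `|C| * 1 <= 2 * `|C| * (u * V) by apply: ler_wpM2l => //; rewrite mulr_ge0.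
    lra.
  have := ler_norm C; lra.
have ji : i != j.
  apply/eqP => ij; move: Hj; rewrite -ij /a subrr normr0; lra.
have S1 : 1 < S by rewrite -sS; nra.
exists (fun l => if l == i then kn j else if l == j then - kn i else 0); split.
- rewrite /dotZ (@big2 _ d i j (fun l m => kn l * m) (kn j) (- kn i)) //; last by move=> l; rewrite mulr0.
  by rewrite mulrN mulrC subrr.
- rewrite /normZ (@big2 _ d i j (fun l m => (m%:~R : R) ^+ 2) (kn j) (- kn i)) //; last first.
    by move=> l; rewrite /= expr2 mulr0.
  rewrite intrN sqrrN -/(x i) -/(x j).
  set T := x j ^+ 2 + x i ^+ 2.
  have T0 : 0 <= T by rewrite /T addr_ge0 // sqr_ge0.
  have tT : Num.sqrt T ^+ 2 = T by rewrite sqr_sqrtr.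
  have t0 : 0 <= Num.sqrt T by apply: sqrtr_ge0.
  have T2 : T <= 2 * S by have := xle i; have := xle j; rewrite /T; lra.
  have T1 : S <= d%:R * T.
    rewrite /T mulrDr; apply: le_trans Sle _; rewrite lerDr; apply: mulr_ge0 => //; exact: sqr_ge0.
  apply/andP; split.
    rewrite /e ltr_pdivrMr //.
    have h : s ^+ 2 < (Num.sqrt T * C') ^+ 2.
      rewrite exprMn tT sS.
      have dT : d%:R * T < C' ^+ 2 * T.
        rewrite ltr_pM2r; last by nra.
        nra.
      lra.
    have := mulr_ge0 t0 (ltW C'0); nra.
  have h : Num.sqrt T ^+ 2 < (C' * s) ^+ 2.
    rewrite exprMn tT sS.
    have c4 : 4 <= C' ^+ 2 by nra.
    have : 4 * S <= C' ^+ 2 * S by rewrite ler_pM2r //; lra.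
    lra.
  have := mulr_ge0 (ltW C'0) s0; nra.
- rewrite /dotRZ (@big2 _ d i j (fun l m => w l * (m%:~R : R)) (kn j) (- kn i)) //; last first.
    by move=> l; rewrite /= mulr0.
  rewrite intrN mulrN -/(x i) -/(x j).
  have -> : w i * x j + - (w j * x i) = a j by [].
  rewrite Hj /=.
  have hWij : u + `|w j| <= W by rewrite hW; exact: (@le_sum2 R d (fun m => `|w m|) i j ji (fun m => normr_ge0 _)).
  have ha : `|a j| <= u * `|x j| + `|w j| * `|x i|.
    by rewrite /a /u -!normrM; apply: (le_trans (ler_normB _ _)).
  have := xabs i; have := xabs j; have := normr_ge0 (w j); have := normr_ge0 (x i); have := normr_ge0 (x j).
  nra.
Qed.

Theorem lemma3p1 (R : realType) (d : nat) (hd : (2 <= d)%N)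
  (w : 'I_d -> R) (hw : nonresonant w)
  (k : nat -> 'I_d -> int)
  (hinf : forall M : R, exists N : nat, forall n : nat, (N <= n)%N -> M < normZ R (k n))
  (C : R)
  (hsmall : forall n : nat,
      `|dotRZ w (k n)| < C / (normZ R (k n)) ^+ (d.-1)) :
  exists C' : R, 1 < C' /\
  exists N : nat, forall n : nat, (N <= n)%N ->
    exists k' : 'I_d -> int,
      [/\ dotZ (k n) k' = 0,
          normZ R (k n) / C' < normZ R k' < C' * normZ R (k n)
        & normZ R (k n) / C' < `|dotRZ w k'| < C' * normZ R (k n)].
Proof.
pose W : R := \sum_l `|w l|.
pose V : R := \sum_l `|w l|^-1.
have W0 : 0 <= W by apply: sumr_ge0 => l _.
have V0 : 0 <= V by apply: sumr_ge0 => l _; rewrite invr_ge0.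
have dV0 := mulr_ge0 (mulr_ge0 (ler0n R 2) (ler0n R d)) V0.
have d0 := ler0n R d.
exists (d%:R + 4 + W + 2 * d%:R * V); split; first by lra.
have [N HN] := hinf (1 + 2 * `|C| * V).
exists N => n Hn.
have H := (@core R d hd w (@nz_coord R d w hw) C (k n) W V (d%:R + 4 + W + 2 * d%:R * V) (normZ R (k n)) erefl erefl erefl erefl (HN n Hn) (hsmall n)).
exact H.
Qed.
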